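(* Let $d\ge 2$, let $V$ be a finite subset of the unit sphere $S^{d-1}\subset\mathbb{R}^d$ with $|V|\ge 2$, and let $d_{\min}(V)=\min\{\|v-v'\| : v,v'\in V,\ v\neq v'\}$. Let $T$ be a random orthogonal matrix uniformly distributed on the orthogonal group $O(d)$ (i.e. distributed according to its normalized Haar probability measure), and for a region $\mathcal{A}\subseteq S^{d-1}$ define the random variable $$g^V_{\mathcal{A}}(T)=\frac{1}{|V|}\sum_{v\in V} I_{\mathcal{A}}(Tv).$$ Let $\mathcal{A}$ be a region of $S^{d-1}$ which can be written as a disjoint union of subregions $\mathcal{A}_1,\dots,\mathcal{A}_N$ such that $\operatorname{Diam}(\mathcal{A}_i)<d_{\min}(V)$ for all $i=1,\dots,N$. Then $$\operatorname{Var}\big(g^V_{\mathcal{A}}(T)\big)\le \pi(\mathcal{A})-\pi^2(\mathcal{A})+\Big(\frac{N}{|V|}-1\Big)\pi(\mathcal{A}).$$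
   Context: $\|\cdot\|$ is the Euclidean norm on $\mathbb{R}^d$. For a region $\mathcal{B}\subseteq S^{d-1}$, $\operatorname{Diam}(\mathcal{B})=\sup\{\|x-x'\| : x,x'\in\mathcal{B}\}$. $\pi$ denotes the normalized surface (uniform) probability measure on $S^{d-1}$, so $\pi(S^{d-1})=1$; regions are measurable subsets of $S^{d-1}$. $I_{\mathcal{A}}$ is the indicator function of $\mathcal{A}$. *)

(* Defs.v *)
From HB Require Import structures.
From mathcomp Require Import all_boot all_order all_algebra.
From mathcomp Require Import all_classical all_reals all_analysis.
Set Implicit Arguments. Unset Strict Implicit. Unset Printing Implicit Defensive.
Import Order.TTheory GRing.Theory Num.Theory.
Import numFieldNormedType.Exports.
Local Open Scope classical_set_scope.
Local Open Scope ring_scope.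

Section defs.
Variables (R : realType) (d : nat).

Definition enorm (v : 'cV[R]_d) : R := Num.sqrt (\sum_(i < d) (v i 0) ^+ 2).

Definition sphere : set 'cV[R]_d := [set v | enorm v = 1].

Definition Diam (B : set 'cV[R]_d) : R :=
  sup [set r | exists x y, B x /\ B y /\ r = enorm (x - y)].

(* minimal distance of a finite point set V (given as a duplicate-free list) *)
Definition dmin (V : seq 'cV[R]_d) : R :=
  inf [set r | exists v w, v \in V /\ w \in V /\ v != w /\ r = enorm (v - w)].

Definition orthogonal_mx (M : 'M[R]_d) : Prop := M^T *m M = 1%:M.

Definition MxBorel := g_sigma_algebraType (@open 'M[R]_d).
Definition VecBorel := g_sigma_algebraType (@open 'cV[R]_d).

(* P is the normalized Haar probability measure on O(d): a probability
   measure on d x d matrices concentrated on O(d) and invariant under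
   left multiplication by orthogonal matrices. *)
Definition is_Haar_On (P : probability MxBorel R) : Prop :=
  P [set M : MxBorel | orthogonal_mx M] = 1%E /\
  forall (U : 'M[R]_d), orthogonal_mx U ->
  forall B : set MxBorel, measurable B ->
    P ((fun M : MxBorel => (U *m M : MxBorel)) @^-1` B) = P B.

(* pi is the normalized surface (uniform) probability measure on S^{d-1}:
   a probability measure concentrated on the sphere, invariant under O(d). *)
Definition is_uniform_sphere (pi : probability VecBorel R) : Prop :=
  pi (sphere : set VecBorel) = 1%E /\
  forall (U : 'M[R]_d), orthogonal_mx U ->
  forall B : set VecBorel, measurable B ->
    pi ((fun v : VecBorel => (U *m v : VecBorel)) @^-1` B) = pi B.

Definition gVA (V : seq 'cV[R]_d) (A : set 'cV[R]_d) (T : MxBorel) : R :=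
  (size V)%:R^-1 * \sum_(v <- V) \1_A (T *m v).

End defs.

(* Main.v *)
Require Import Defs.
From HB Require Import structures.
From mathcomp Require Import all_boot all_order all_algebra.
From mathcomp Require Import all_classical all_reals all_analysis.
From mathcomp Require Import measurable_realfun.
From mathcomp Require Import ring lra.
Import Order.TTheory GRing.Theory Num.Theory.
Import numFieldNormedType.Exports.
Local Open Scope classical_set_scope.
Local Open Scope ring_scope.

Set Implicit Arguments. Unset Strict Implicit.
Section meas.
Variable R : realType.
Local Notation MB m n := (g_sigma_algebraType (@open 'M[R]_(m,n))).

Lemma coord_meas m n (i : 'I_m) (j : 'I_n) :
  measurable_fun setT (fun M : MB m n => M i j).
Proof.
apply: (measurability _ (measurable_realfun.RGenOInfty.measurableE R)) => /= _ [_ [a ->] <-].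
rewrite setTI; apply: sub_sigma_algebra.
apply: open_comp; first by move=> M _; exact: coord_continuous.
by apply: itv_open_ends_open; rewrite /itv_open_ends.
Qed.

Lemma ball_mxP m n (M N : 'M[R]_(m,n)) e : 0 < e ->
  ball M e N <-> forall i j, `|M i j - N i j| < e.
Proof.
move=> e0; rewrite -ball_normE /ball_ /= [X in X < _]/Num.Def.normr /= mx_normrE.
split.
- move=> /bigmax_ltP [_ h] i j; have := h (i, j) erefl; by rewrite !mxE.
- move=> h; apply/bigmax_ltP; split => // -[i j] _ /=.
  by rewrite !mxE; exact: h.
Qed.


Definition box m n (q : 'M[rat]_(m,n)) (r : nat) : set 'M[R]_(m,n) :=
  [set M | forall i j, `|M i j - ratr (q i j)| < r.+1%:R^-1].

Lemma box_cover m n (Op : set 'M[R]_(m,n)) (M : 'M[R]_(m,n)) : open Op -> Op M ->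
  exists (q : 'M[rat]_(m,n)) (r : nat), box q r M /\ box q r `<=` Op.
Proof.
move=> oO OM.
have : nbhs M Op by move: oO; rewrite openE; apply.
move=> /nbhs_ballP[e e0 eO].
set r := Num.Def.trunc (2 / e).
have hr : r.+1%:R^-1 < e / 2.
  rewrite -[e / 2]invf_div ltf_pV2 ?posrE ?divr_gt0 //; exact: truncnS_gt.
have hq : forall ij : 'I_m * 'I_n, exists q : rat,
    `|M ij.1 ij.2 - ratr q| < r.+1%:R^-1.
  move=> ij; have : M ij.1 ij.2 - r.+1%:R^-1 < M ij.1 ij.2 + r.+1%:R^-1.
    by rewrite ltrD2l gtrN // invr_gt0.
  move=> /rat_in_itvoo[q]; rewrite in_itv /= => hq.
  by exists q; rewrite ltr_distlC.
have [f hf] := choice hq.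
exists (\matrix_(i, j) f (i, j)), r; split.
  by move=> i j; rewrite mxE; exact: (hf (i, j)).
move=> N hN; apply: eO; apply/ball_mxP => // i j.
have := hN i j; rewrite mxE => hN'.
have := hf (i, j) => /= hM.
rewrite (le_lt_trans (ler_distD (ratr (f (i, j))) _ _)) //.
rewrite distrC in hN'.
rewrite (lt_trans (ltrD hM hN')) //.
by rewrite [e]splitr; exact: ltrD.
Qed.

Lemma mx_meas_crit dd (T0 : measurableType dd) m n (F : T0 -> MB m n) :
  (forall i j, measurable_fun setT (fun t => F t i j)) -> measurable_fun setT F.
Proof.
move=> mF.
apply: (@measurability _ _ _ _ setT F (@open 'M[R]_(m,n))) => //.
move=> _ [Op oO <-].
pose B k : set 'M[R]_(m,n) :=
  if (unpickle k : option ('M[rat]_(m,n) * nat)) is Some (q, r) then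
    (if pselect (box q r `<=` Op) then box q r else set0) else set0.
have OE : Op = \bigcup_k B k.
  apply/seteqP; split => M.
    move=> OM; have [q [r [bM bO]]] := box_cover oO OM.
    exists (pickle (q, r)) => //; rewrite /B pickleK.
    by case: pselect.
  move=> [k _]; rewrite /B; destruct (unpickle k) as [[q r]|] => //.
  by case: pselect => // h /h.
rewrite OE preimage_bigcup setI_bigcupr; apply: bigcupT_measurable => k.
rewrite /B; destruct (unpickle k) as [[q r]|]; last by rewrite preimage_set0 setI0.
case: pselect => hq; last by rewrite preimage_set0 setI0.
rewrite setTI.
have -> : F @^-1` box q r = \bigcap_(ij in [set: 'I_m * 'I_n])
   [set t | `|F t ij.1 ij.2 - ratr (q ij.1 ij.2)| < r.+1%:R^-1].
  apply/seteqP; split => t /=.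
    by move=> h [i j] _; exact: h.
  by move=> h i j; exact: (h (i, j)).
apply: fin_bigcap_measurable; first exact: finite_finset.
move=> [i j] _ /=.
have m1 : measurable_fun setT (fun t => `|F t i j - ratr (q i j)|).
  apply: measurableT_comp; first exact: measurable_realfun.normr_measurable.
  by apply: measurable_funB => //; exact: measurable_cst.
have := measurable_fun_ltr m1 (measurable_cst (r.+1%:R^-1 : R)) measurableT (Y := [set true]) I.
by rewrite setTI.
Qed.


Lemma mul_meas dd (T0 : measurableType dd) a b c (F : T0 -> MB a b) (G : T0 -> MB b c) :
  measurable_fun setT F -> measurable_fun setT G ->
  measurable_fun setT (fun t => (F t *m G t : MB a c)).
Proof.
move=> mF mG; apply: mx_meas_crit => i j.
under eq_fun do rewrite mxE.
apply: measurable_sum => k; apply: measurable_funM.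
  exact: (measurableT_comp (coord_meas i k) mF).
exact: (measurableT_comp (coord_meas k j) mG).
Qed.

Lemma tr_meas dd (T0 : measurableType dd) a b (F : T0 -> MB a b) :
  measurable_fun setT F -> measurable_fun setT (fun t => ((F t)^T : MB b a)).
Proof.
move=> mF; apply: mx_meas_crit => i j.
under eq_fun do rewrite mxE.
exact: (measurableT_comp (coord_meas j i) mF).
Qed.

Lemma set1_meas m n (c : 'M[R]_(m,n)) : measurable ([set c] : set (MB m n)).
Proof.
have -> : ([set c] : set (MB m n)) = \bigcap_(ij in [set: 'I_m * 'I_n])
    ((fun M : MB m n => M ij.1 ij.2) @^-1` [set c ij.1 ij.2]).
  apply/seteqP; split => M /=.
    by move=> -> [i j] _.
  by move=> h; apply/matrixP => i j; exact: (h (i, j)).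
apply: fin_bigcap_measurable; first exact: finite_finset.
move=> [i j] _; rewrite -[X in measurable X]setTI.
by apply: coord_meas => //; exact: measurable_set1.
Qed.

End meas.

Set Implicit Arguments. Unset Strict Implicit.
Section lin.
Variables (R : realType) (d : nat).
Implicit Types (u v w x : 'cV[R]_d) (T U W : 'M[R]_d).

Definition dotv u w : R := \sum_i u i 0 * w i 0.

Lemma trmx_mulE u w : u^T *m w = (dotv u w)%:M.
Proof.
rewrite [LHS]mx11_scalar; congr (_%:M).
by rewrite mxE /dotv; apply: eq_bigr => i _; rewrite mxE.
Qed.

Lemma dotvC u w : dotv u w = dotv w u.
Proof. by apply: eq_bigr => i _; rewrite mulrC. Qed.

Lemma dotv_ge0 u : 0 <= dotv u u.
Proof. by apply: sumr_ge0 => i _; rewrite -expr2 sqr_ge0. Qed.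

Lemma dotv_eq0 u : dotv u u = 0 -> u = 0.
Proof.
move=> /eqP; rewrite psumr_eq0 => [/allP h|i _]; last by rewrite -expr2 sqr_ge0.
apply/matrixP => i j; rewrite (ord1 j) mxE.
have := h i (mem_index_enum _); rewrite -expr2 sqrf_eq0 => /eqP ->//.
Qed.

Lemma enormE u : enorm u = Num.sqrt (dotv u u).
Proof. by rewrite /enorm /dotv; congr Num.sqrt; apply: eq_bigr => i _; rewrite expr2. Qed.

Lemma sphereE u : sphere u <-> dotv u u = 1.
Proof.
rewrite /sphere /= enormE; split; last by move=> ->; rewrite sqrtr1.
move=> h; have := sqr_sqrtr (dotv_ge0 u); rewrite h expr1n; by move=> <-.
Qed.

Lemma orth_tr T : orthogonal_mx T -> orthogonal_mx T^T.
Proof. by rewrite /orthogonal_mx trmxK => /mulmx1C. Qed.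

Lemma orth_dot T u w : orthogonal_mx T -> dotv (T *m u) (T *m w) = dotv u w.
Proof.
move=> hT.
have : (T *m u)^T *m (T *m w) = u^T *m w.
  by rewrite trmx_mul -mulmxA (mulmxA T^T) hT mul1mx.
by rewrite !trmx_mulE => /matrixP /(_ 0 0); rewrite !mxE /= !mulr1n.
Qed.

Lemma orth_enorm T u : orthogonal_mx T -> enorm (T *m u) = enorm u.
Proof. by move=> hT; rewrite !enormE orth_dot. Qed.


Lemma dotvBl u w x : dotv (u - w) x = dotv u x - dotv w x.
Proof.
by rewrite /dotv -sumrB; apply: eq_bigr => i _; rewrite !mxE mulrBl.
Qed.

Lemma dotvBr u w x : dotv x (u - w) = dotv x u - dotv x w.
Proof. by rewrite dotvC dotvBl !(dotvC x). Qed.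

Lemma householder x v : sphere x -> sphere v ->
  exists W, orthogonal_mx W /\ W *m v = x.
Proof.
move=> /sphereE hx /sphereE hv.
have [->|xv] := eqVneq x v.
  by exists 1%:M; split; rewrite /orthogonal_mx ?trmx1 mul1mx.
set u := v - x.
set s := dotv u u.
have s0 : s != 0.
  apply/eqP => /dotv_eq0 /eqP; rewrite subr_eq0 => /eqP vx.
  by move: xv; rewrite vx eqxx.
set c := 2 / s.
have cs : c * s = 2 by rewrite /c mulfVK.
pose W := 1%:M - c *: (u *m u^T).
have WE p (Y : 'M[R]_(d, p)) : W *m Y = Y - c *: (u *m (u^T *m Y)).
  by rewrite /W mulmxBl mul1mx -scalemxAl mulmxA.
have WT : W^T = W.
  by rewrite /W linearB /= trmx1 linearZ /= trmx_mul trmxK.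
have uv : dotv u v = s / 2.
  rewrite /s /u !dotvBl !dotvBr hx hv (dotvC v x).
  lra.
exists W; split.
  rewrite /orthogonal_mx WT WE.
  have -> : u^T *m W = - u^T.
    rewrite -[u^T *m W]trmxK trmx_mul WT WE trmxK trmx_mulE.
    rewrite mul_mx_scalar scalerA -/s cs.
    by rewrite scaler_nat mulr2n opprD addrA subrr add0r linearN.
  by rewrite mulmxN scalerN opprK /W subrK.
rewrite WE trmx_mulE mul_mx_scalar scalerA uv.
have -> : c * (s / 2) = 1 by rewrite mulrA cs divff.
by rewrite scale1r /u opprB addrC subrK.
Qed.

End lin.

Set Implicit Arguments. Unset Strict Implicit.

Section gen.
Variable R : realType.
Local Open Scope ereal_scope.

Lemma ae_const dd (T : measurableType dd) (m : probability T R) (G : set T)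
  (f : T -> \bar R) (c : R) :
  measurable G -> m G = 1 -> measurable_fun setT f ->
  (forall x, G x -> f x = c%:E) -> \int[m]_x f x = c%:E.
Proof.
move=> mG mG1 mf hf.
rewrite (ae_eq_integral (cst c%:E)) //.
- rewrite integral_cst //. by have := probability_setT m; rewrite /= => ->; rewrite mule1.
- exists (~` G); split => //; first exact: measurableC.
    have := probability_setC m mG; move=> /= ->. by rewrite mG1 subee.
  by move=> x /= h Gx; apply: h => _; exact: hf.
Qed.

Lemma sec_swap d1 d2 (T1 : measurableType d1) (T2 : measurableType d2)
  (m1 : probability T1 R) (m2 : probability T2 R) (E : set (T1 * T2)) :
  measurable E ->
  \int[m1]_x m2 (xsection E x) = \int[m2]_y m1 (ysection E y).
Proof.
move=> mE; have := indic_fubini_tonelli m1 m2 mE.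
by rewrite indic_fubini_tonelli_FE // indic_fubini_tonelli_GE.
Qed.

End gen.

Section haar.
Variables (R : realType) (d : nat).
Local Notation MxB := (MxBorel R d).
Local Notation VB := (VecBorel R d).
Variables (P : probability MxB R) (hP : is_Haar_On P).

Definition Orth : set MxB := [set M | orthogonal_mx M].

Lemma Orth_meas : measurable Orth.
Proof.
have -> : Orth = (fun M : MxB => (M^T *m M : MxB)) @^-1` [set 1%:M].
  by [].
rewrite -[X in measurable X]setTI.
apply: (mul_meas (tr_meas (@measurable_id _ MxB setT)) (@measurable_id _ MxB setT)) => //.
exact: set1_meas.
Qed.

Lemma POrth : P Orth = 1%E.
Proof. by case: hP. Qed.

Lemma Pinv U (B : set MxB) : orthogonal_mx U -> measurable B ->
  P ((fun M : MxB => (U *m M : MxB)) @^-1` B) = P B.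
Proof. case: hP => _ h hU mB. exact: (h U hU B mB). Qed.

Lemma tr_inv (B : set MxB) : measurable B -> P B = P [set S : MxB | B (S^T)].
Proof.
move=> mB.
pose E := [set p : MxB * MxB | B (p.1^T *m p.2)].
have mE : measurable E.
  rewrite -[E]setTI.
  apply: (mul_meas (tr_meas measurable_fst) measurable_snd) => //.
have mtB : measurable ([set S : MxB | B (S^T)]).
  rewrite -[X in measurable X]setTI.
  exact: (tr_meas (@measurable_id _ MxB setT)).
have := sec_swap P P mE.
rewrite (@ae_const _ _ _ P Orth (fun x => P (xsection E x)) (fine (P B))); last 4 first.
- exact: Orth_meas.
- exact: POrth.
- exact: measurable_fun_xsection.
- move=> S OS.
  have -> : xsection E S = (fun M : MxB => ((S^T) *m M : MxB)) @^-1` B.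
    by apply/seteqP; split => y; rewrite /xsection /= inE.
  rewrite Pinv //; last exact: orth_tr.
  by rewrite fineK // fin_num_measure.
rewrite (@ae_const _ _ _ P Orth (fun y => P (ysection E y)) (fine (P [set S : MxB | B (S^T)]))); last 4 first.
- exact: Orth_meas.
- exact: POrth.
- exact: measurable_fun_ysection.
- move=> T OT.
  have -> : ysection E T = (fun M : MxB => ((T^T) *m M : MxB)) @^-1` [set S : MxB | B (S^T)].
    apply/seteqP; split => y; rewrite /ysection /= inE /=;
    by rewrite trmx_mul trmxK.
  rewrite Pinv //; last exact: orth_tr.
  by rewrite fineK // fin_num_measure.
move=> h.
rewrite -[LHS]fineK ?fin_num_measure // -[RHS]fineK ?fin_num_measure //.
Qed.


Lemma right_inv W (B : set MxB) : orthogonal_mx W -> measurable B ->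
  P [set T : MxB | B (T *m W)] = P B.
Proof.
move=> oW mB.
have mC : measurable [set T : MxB | B (T *m W)].
  rewrite -[X in measurable X]setTI.
  exact: (mul_meas (@measurable_id _ MxB setT) (measurable_cst (W : MxB))).
have mtB : measurable ([set S : MxB | B (S^T)]).
  rewrite -[X in measurable X]setTI.
  exact: (tr_meas (@measurable_id _ MxB setT)).
rewrite tr_inv //.
have -> : [set S : MxB | [set T : MxB | B (T *m W)] S^T] =
    (fun M : MxB => ((W^T) *m M : MxB)) @^-1` [set S : MxB | B (S^T)].
  by apply/seteqP; split => y /=; rewrite trmx_mul trmxK.
rewrite Pinv //; last exact: orth_tr.
exact: (esym (tr_inv mB)).
Qed.

Lemma f_const (A : set VB) (x v : 'cV[R]_d) : measurable A ->
  sphere x -> sphere v ->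
  P [set T : MxB | A (T *m x)] = P [set T : MxB | A (T *m v)].
Proof.
move=> mA sx sv.
have [W [oW Wv]] := householder sx sv.
have mB : measurable [set T : MxB | A (T *m v)].
  rewrite -[X in measurable X]setTI.
  exact: (mul_meas (@measurable_id _ MxB setT) (measurable_cst (v : VB))).
rewrite -(right_inv oW mB) /=.
by congr (P _); apply/seteqP; split => T /=; rewrite -mulmxA Wv.
Qed.

Variables (pi : probability VB R) (hpi : is_uniform_sphere pi).

Lemma sphere_meas : measurable (@sphere R d : set VB).
Proof.
have -> : (@sphere R d : set VB) = (fun u : VB => dotv u u) @^-1` [set 1%R].
  by apply/seteqP; split => u /=; rewrite sphereE.
have m1 : measurable_fun setT (fun u : VB => dotv u u).
  apply: measurable_sum => i; apply: measurable_funM;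
    exact: (coord_meas i 0).
rewrite -[X in measurable X]setTI; exact: (m1 measurableT _ (measurable_set1 1%R)).
Qed.

Lemma pi_eq (A : set VB) (v : 'cV[R]_d) : measurable A -> sphere v ->
  P [set T : MxB | A (T *m v)] = pi A.
Proof.
move=> mA sv.
have mB : measurable [set T : MxB | A (T *m v)].
  rewrite -[X in measurable X]setTI.
  exact: (mul_meas (@measurable_id _ MxB setT) (measurable_cst (v : VB))).
pose E := [set p : MxB * VB | A (p.1 *m p.2)].
have mE : measurable E.
  rewrite -[E]setTI.
  apply: (mul_meas measurable_fst measurable_snd) => //.
have := sec_swap P pi mE.
rewrite (@ae_const _ _ _ P Orth (fun x => pi (xsection E x)) (fine (pi A))); last 4 first.
- exact: Orth_meas.
- exact: POrth.
- exact: measurable_fun_xsection.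
- move=> S OS.
  have -> : xsection E S = (fun u : VB => (S *m u : VB)) @^-1` A.
    by apply/seteqP; split => y; rewrite /xsection /= inE.
  case: hpi => _ ->//.
  by rewrite fineK // fin_num_measure.
rewrite (@ae_const _ _ _ pi (@sphere R d : set VB) (fun y => P (ysection E y))
   (fine (P [set T : MxB | A (T *m v)]))); last 4 first.
- exact: sphere_meas.
- by case: hpi.
- exact: measurable_fun_ysection.
- move=> x sx.
  have -> : ysection E x = [set T : MxB | A (T *m x)].
    by apply/seteqP; split => y; rewrite /ysection /= inE.
  rewrite (f_const mA sx sv).
  by rewrite fineK // fin_num_measure.
move=> h.
rewrite -[LHS]fineK ?fin_num_measure // -[RHS]fineK ?fin_num_measure //.
Qed.

End haar.

Set Implicit Arguments. Unset Strict Implicit.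

Section count.
Variable R : realType.

Lemma count_le1 (T0 : eqType) (s : seq T0) (p : pred T0) : uniq s ->
  {in s &, forall x y, p x -> p y -> x = y} ->
  \sum_(x <- s) (p x)%:R <= 1 :> R.
Proof.
elim: s => [|x s IH]; first by rewrite big_nil.
move=> /= /andP[xs us] hp; rewrite big_cons.
case px : (p x).
  rewrite big1_seq ?addr0 // => y /andP[_ ys].
  case py : (p y) => //.
  have yx : y = x by apply: hp; rewrite ?inE ?eqxx ?ys ?orbT.
  by move: xs; rewrite -yx ys.
rewrite add0r; apply: IH => // a b ai bi; apply: hp; by rewrite inE ?ai ?bi orbT.
Qed.

Lemma sum1_seq (T0 : Type) (s : seq T0) : \sum_(x <- s) (1 : R) = (size s)%:R.
Proof.
elim: s => [|x s IH]; first by rewrite big_nil.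
by rewrite big_cons IH /= -add1n natrD.
Qed.

End count.

Section dist.
Variables (R : realType) (d : nat).

Lemma dotv_sub_le (x y : 'cV[R]_d) :
  dotv (x - y) (x - y) <= 2 * dotv x x + 2 * dotv y y.
Proof.
rewrite /dotv !mulr_sumr -big_split /=; apply: ler_sum => i _.
rewrite !mxE; have h := sqr_ge0 (x i 0 + y i 0); nra.
Qed.

Lemma enorm_sphere_le (x y : 'cV[R]_d) : sphere x -> sphere y -> enorm (x - y) <= 4.
Proof.
move=> /sphereE hx /sphereE hy.
rewrite enormE -[4 in leRHS]ger0_norm // -sqrtr_sqr ler_sqrt ?sqr_ge0 //.
apply: (le_trans (dotv_sub_le x y)); rewrite hx hy; lra.
Qed.

End dist.

Section cnt.
Variables (R : realType) (d : nat) (V : seq 'cV[R]_d).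
Hypothesis hVuniq : uniq V.
Hypothesis hVsph : forall v, v \in V -> @sphere R d v.
Variables (A : set 'cV[R]_d) (hAs : A `<=` @sphere R d).
Variables (N : nat) (Ai : 'I_N -> set 'cV[R]_d).
Hypothesis hAU : A = \bigcup_(i in setT) Ai i.
Hypothesis hdiam : forall i, Diam (Ai i) < dmin V.

Lemma pair_unique T i v w : orthogonal_mx T -> v \in V -> w \in V ->
  Ai i (T *m v) -> Ai i (T *m w) -> v = w.
Proof.
move=> oT vV wV hv hw.
have [//|vw] := eqVneq v w.
have h1 : dmin V <= enorm (v - w).
  apply: ge_inf; last by exists v, w.
  by exists 0 => r [a [b [_ [_ [_ ->]]]]]; rewrite enormE sqrtr_ge0.
have sA y : Ai i y -> sphere y.
  by move=> hy; apply: hAs; rewrite hAU; exists i.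
have h2 : enorm (T *m v - T *m w) <= Diam (Ai i).
  apply: sup_upper_bound; last by exists (T *m v), (T *m w).
  split; first by exists (enorm (T *m v - T *m w)); exists (T *m v), (T *m w).
  exists 4 => r [a [b [ha [hb ->]]]].
  by apply: enorm_sphere_le; apply: sA.
rewrite -mulmxBr orth_enorm // in h2.
have := lt_le_trans (le_lt_trans h2 (hdiam i)) h1.
by rewrite ltxx.
Qed.

Lemma count_le_N T : orthogonal_mx T ->
  \sum_(v <- V) \1_A (T *m v) <= N%:R :> R.
Proof.
move=> oT.
apply: (@le_trans _ _ (\sum_(v <- V) \sum_(i < N) \1_(Ai i) (T *m v))).
  apply: ler_sum => v _.
  rewrite indicE; case: (boolP (T *m v \in A)) => hA; last first.
    by rewrite /= sumr_ge0.
  move: hA; rewrite inE hAU => -[i _ hi].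
  rewrite (bigD1 i) //= indicE mem_set //= lerDl sumr_ge0 //.
rewrite exchange_big /=.
rewrite -[N in N%:R]card_ord -sumr_const.
apply: ler_sum => i _.
have := @count_le1 R _ V (fun v => T *m v \in Ai i) hVuniq.
under eq_bigr do rewrite indicE.
apply => v w vV wV; rewrite !inE; exact: pair_unique.
Qed.

End cnt.

Unset Implicit Arguments. Set Strict Implicit.

Theorem theorem1 (R : realType) (d : nat) (hd : (2 <= d)%N)
  (V : seq 'cV[R]_d) (hVuniq : uniq V) (hVsize : (2 <= size V)%N)
  (hVsph : forall v, v \in V -> @sphere R d v)
  (P : probability (MxBorel R d) R) (hP : is_Haar_On P)
  (pi : probability (VecBorel R d) R) (hpi : is_uniform_sphere pi)
  (A : set (VecBorel R d)) (hAm : measurable A) (hAs : A `<=` @sphere R d)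
  (N : nat) (Ai : 'I_N -> set (VecBorel R d))
  (hAim : forall i, measurable (Ai i))
  (hAU : A = \bigcup_(i in setT) Ai i)
  (hAdisj : trivIset setT Ai)
  (hdiam : forall i, Diam (Ai i) < dmin V) :
  ('V_P[gVA V A] <=
    (fine (pi A) - fine (pi A) ^+ 2
     + ((N%:R / (size V)%:R) - 1) * fine (pi A))%:E)%E.
Proof.
set n := size V.
have n0 : (0 < n%:R :> R) by rewrite ltr0n (leq_trans _ hVsize).
set p := fine (pi A).
have pE : pi A = p%:E by rewrite fineK // fin_num_measure.
set g := gVA V A.
pose Bv v := [set T : MxBorel R d | A (T *m v)].
have mBv v : measurable (Bv v).
  rewrite -[X in measurable X]setTI.
  exact: (mul_meas (@measurable_id _ (MxBorel R d) setT) (measurable_cst (v : VecBorel R d))).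
have gE T : g T = n%:R^-1 * \sum_(v <- V) \1_(Bv v) T.
  by rewrite /g /gVA; congr (_ * _); apply: eq_bigr => v _.
have mg : measurable_fun setT g.
  rewrite (_ : g = fun T => n%:R^-1 * \sum_(v <- V) \1_(Bv v) T); last first.
    by apply/funext => T; rewrite gE.
  apply: measurable_funM; first exact: measurable_cst.
  by apply: measurable_sum => v; exact: measurable_indic.
have k_ge0 T : 0 <= \sum_(v <- V) \1_(Bv v) T :> R.
  by apply: sumr_ge0 => v _; rewrite indicE ler0n.
have k_len T : \sum_(v <- V) \1_(Bv v) T <= n%:R :> R.
  rewrite -sum1_seq; apply: ler_sum => v _.
  by rewrite indicE; case: (_ \in _); rewrite ?ler01 ?lexx.
have g_ge0 T : 0 <= g T by rewrite gE mulr_ge0 // invr_ge0 ltW.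
have g_le1 T : g T <= 1.
  rewrite gE; apply: (le_trans (ler_wpM2l _ (k_len T))).
    by rewrite invr_ge0 ltW.
  by rewrite mulVf // lt0r_neq0.
have Eg : ('E_P[g] = p%:E)%E.
  rewrite unlock.
  under eq_integral => T _ do rewrite gE EFinM -sumEFin.
  have mI v : measurable_fun setT (fun x : MxBorel R d => (\1_(Bv v) x : R)%:E).
    by apply/measurable_EFinP; exact: measurable_indic.
  have mS : measurable_fun setT
      (fun x : MxBorel R d => \sum_(v <- V) (\1_(Bv v) x : R)%:E).
    exact: emeasurable_sum.
  rewrite (ge0_integralZl _ measurableT mS); last 2 first.
  - by move=> T _; rewrite sumEFin lee_fin.
  - by rewrite lee_fin invr_ge0 ltW.
  rewrite (ge0_integral_sum _ measurableT mI); last first.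
  - by move=> v T _; rewrite lee_fin.
  under eq_bigr => v _ do rewrite integral_indic // setIT.
  rewrite big_seq.
  rewrite (eq_bigr (fun=> p%:E)); last first.
    by move=> v vV; have := pi_eq hP hpi hAm (hVsph v vV); rewrite pE.
  rewrite -big_seq sumEFin -EFinM; congr EFin.
  have -> : \sum_(i <- V) p = p * n%:R.
    by rewrite -sum1_seq mulr_sumr; apply: eq_bigr => *; rewrite mulr1.
  by field; rewrite lt0r_neq0.
have Lg : g \in Lfun P 1.
  apply/Lfun1_integrable.
  apply: (le_integrable measurableT (f := EFin \o g) (g := EFin \o cst 1)).
  - exact/measurable_EFinP.
  - by move=> T _ /=; rewrite lee_fin ger0_norm // ger0_norm.
  - exact: finite_measure_integrable_cst.
have Lgg : (g * g)%R \in Lfun P 1.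
  apply/Lfun1_integrable.
  apply: (le_integrable measurableT (f := EFin \o (g * g)%R) (g := EFin \o cst 1)).
  - by apply/measurable_EFinP; exact: measurable_funM.
  - move=> T _ /=; rewrite lee_fin normr1.
    have -> : (g * g)%R T = g T * g T by [].
    rewrite ger0_norm ?(mulr_ge0 (g_ge0 T) (g_ge0 T)) //. exact: (mulr_ile1 (g_ge0 T) (g_ge0 T) (g_le1 T) (g_le1 T)).
  - exact: finite_measure_integrable_cst.
have hae : {ae P, forall T, (g * g)%R T <= ((N%:R / n%:R) \o* g) T}.
  exists (~` Orth (d:=d) (R:=R)); split.
  - exact: (measurableC (@Orth_meas R d)).
  - have := probability_setC P (Orth_meas (R:=R) (d:=d)).
    rewrite /= => ->; have := POrth hP; rewrite /= => ->; by rewrite subee.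
  - move=> T hnot OT; apply: hnot => /=.
    have kN := count_le_N hVuniq hAs hAU hdiam OT.
    have k0 : 0 <= \sum_(v <- V) \1_A (T *m v) :> R.
      by apply: sumr_ge0 => v _; rewrite indicE ler0n.
    rewrite /g /gVA.
    set k := \sum_(v <- V) \1_A (T *m v) in kN k0 *.
    have ni : 0 < n%:R^-1 :> R by rewrite invr_gt0.
    have kN2 : 0 <= N%:R - k by rewrite subr_ge0.
    have h := mulr_ge0 (mulr_ge0 (ltW ni) (ltW ni)) (mulr_ge0 k0 kN2).
    rewrite /=; set c := n%:R^-1 in ni h *.
    have -> : ((fun T0 : MxBorel R d => c * \sum_(v <- V) \1_A (T0 *m v)) *
      (fun T0 : MxBorel R d => c * \sum_(v <- V) \1_A (T0 *m v)))%R T = (c * k) * (c * k) by [].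
    nra.
have hle : ('E_P[(g * g)%R] <= ((N%:R / n%:R) * p)%:E)%E.
  rewrite EFinM -Eg -expectationZl //.
  apply: expectation_le => //.
  - exact: measurable_funM.
  - exact: measurable_funM.
  - by move=> T; rewrite /= mulr_ge0.
  - by move=> T; rewrite /= mulr_ge0 // divr_ge0.
rewrite /variance covarianceE // Eg.
move: hle (expectation_fin_num Lgg); case: ('E_P[(g * g)%R])%E => // e hle _.
rewrite -EFinM -EFinB lee_fin; rewrite lee_fin in hle.
set q := N%:R / n%:R in hle *.
have -> : p - p ^+ 2 + (q - 1) * p = q * p - p * p by ring.
by rewrite lerD2r.
Qed.
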